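(* Connes' cyclic category $\Lambda$ and its wide subcategory of cyclic injections are quasi-Gröbner.
   Context: Quasi-Gröbner categories. Let $\mathcal{C}$ be a small category and $c$ an object. An admissible order on the morphisms out of $c$ is a choice, for every object $c'$, of a well-order on $\mathrm{Hom}(c,c')$ such that $f\prec f'$ implies $g\circ f\prec g\circ f'$ for all $g$. On morphisms out of $c$ put the preorder $f\le g$ iff $g=h\circ f$ for some $h$; $|c/\mathcal{C}|$ is the associated poset. A poset is Noetherian if every sequence $x_1,x_2,\dots$ has $i<j$ with $x_i\le x_j$. $\mathcal{C}$ is Gröbner if for every object $c$: (G1) morphisms out of $c$ admit an admissible order, and (G2) $|c/\mathcal{C}|$ is Noetherian. A functor $\Phi:\mathcal{C}\to\mathcal{D}$ has property (F) if for every object $d$ of $\mathcal{D}$ there are finitely many objects $c_i$ of $\mathcal{C}$ and morphisms $f_i:d\to\Phi(c_i)$ such that every $f:d\to\Phi(c)$ factors as $\Phi(g)\circ f_i$ for some $i$ and $g:c_i\to c$. $\mathcal{D}$ is quasi-Gröbner if there is a Gröbner $\mathcal{C}$ and an essentially surjective functor $\mathcal{C}\to\mathcal{D}$ with property (F). The subcategory of cyclic injections of $\Lambda$ is the wide subcategory of monomorphisms (morphisms whose underlying map of cyclically ordered sets is injective). *)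

(* Defs.v *)
From Stdlib Require Import ZArith Lia List.
Set Implicit Arguments.

Record PreCat := {
  Obj : Type;
  Hom : Obj -> Obj -> Type;
  idm : forall a : Obj, Hom a a;
  comp : forall a b c : Obj, Hom b c -> Hom a b -> Hom a c }.
Arguments idm {p} a.
Arguments comp {p a b c} _ _.

Definition is_category (C : PreCat) : Prop :=
  (forall a b c d (f : Hom C a b) (g : Hom C b c) (h : Hom C c d),
      comp h (comp g f) = comp (comp h g) f) /\
  (forall a b (f : Hom C a b), comp (idm b) f = f) /\
  (forall a b (f : Hom C a b), comp f (idm a) = f).

Record Functor (C D : PreCat) := {
  Fobj : Obj C -> Obj D;
  Fmor : forall a b : Obj C, Hom C a b -> Hom D (Fobj a) (Fobj b);
  Fmor_comp : forall a b c (f : Hom C a b) (g : Hom C b c),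
      Fmor a c (comp g f) = comp (Fmor b c g) (Fmor a b f);
  Fmor_id : forall a, Fmor a a (idm a) = idm (Fobj a) }.
Arguments Fobj {C D} _ _.
Arguments Fmor {C D} _ {a b} _.

Definition strict_well_order (T : Type) (lt : T -> T -> Prop) : Prop :=
  (forall x, ~ lt x x) /\
  (forall x y z, lt x y -> lt y z -> lt x z) /\
  (forall x y, lt x y \/ x = y \/ lt y x) /\
  well_founded lt.

Definition admissible_order (C : PreCat) (c : Obj C)
  (lt : forall c' : Obj C, Hom C c c' -> Hom C c c' -> Prop) : Prop :=
  (forall c', strict_well_order (lt c')) /\
  (forall c' c'' (g : Hom C c' c'') (f f' : Hom C c c'),
      lt c' f f' -> lt c'' (comp g f) (comp g f')).

Definition under (C : PreCat) (c : Obj C) := {c' : Obj C & Hom C c c'}.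

Definition under_le {C : PreCat} {c : Obj C} (u v : under C c) : Prop :=
  exists h : Hom C (projT1 u) (projT1 v), projT2 v = comp h (projT2 u).

Definition G1 {C : PreCat} (c : Obj C) : Prop :=
  exists lt, @admissible_order C c lt.

Definition G2 {C : PreCat} (c : Obj C) : Prop :=
  forall s : nat -> under C c, exists i j : nat, (i < j)%nat /\ under_le (s i) (s j).

Definition Groebner (C : PreCat) : Prop := forall c : Obj C, G1 c /\ G2 c.

Definition isomorphic {D : PreCat} (a b : Obj D) : Prop :=
  exists (f : Hom D a b) (g : Hom D b a), comp g f = idm a /\ comp f g = idm b.

Definition ess_surj {C D : PreCat} (F : Functor C D) : Prop :=
  forall d : Obj D, exists c : Obj C, isomorphic d (Fobj F c).

Definition propF {C D : PreCat} (F : Functor C D) : Prop :=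
  forall d : Obj D,
    exists L : list {c : Obj C & Hom D d (Fobj F c)},
      forall (c : Obj C) (f : Hom D d (Fobj F c)),
        exists p, In p L /\
          exists g : Hom C (projT1 p) c, f = comp (Fmor F g) (projT2 p).

Definition quasiGroebner (D : PreCat) : Prop :=
  exists C : PreCat, is_category C /\ Groebner C /\
    exists F : Functor C D, ess_surj F /\ propF F.

Definition WideSub (C : PreCat) (P : forall a b, Hom C a b -> Prop)
  (Pid : forall a, P a a (idm a))
  (Pcomp : forall a b c (f : Hom C a b) (g : Hom C b c), P b c g -> P a b f -> P a c (comp g f))
  : PreCat :=
  {| Obj := Obj C;
     Hom := fun a b => {f : Hom C a b | P a b f};
     idm := fun a => exist _ (idm a) (Pid a);
     comp := fun a b c g f =>
       exist _ (comp (proj1_sig g) (proj1_sig f))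
             (Pcomp _ _ _ _ _ (proj2_sig g) (proj2_sig f)) |}.

(* ---------- Connes' cyclic category Lambda ----------
   Object n : nat stands for [n], the cyclically ordered set Z/(n+1).
   A morphism [m] -> [n] is a class of nondecreasing maps f : Z -> Z with
   f(x + m + 1) = f(x) + n + 1, modulo f ~ f + k(n+1); we use the unique
   representative with 0 <= f 0 <= n. *)
Open Scope Z_scope.

Definition cyc_map (m n : nat) (f : Z -> Z) : Prop :=
  (forall x y, x <= y -> f x <= f y) /\
  (forall x, f (x + Z.of_nat (S m)) = f x + Z.of_nat (S n)) /\
  0 <= f 0 <= Z.of_nat n.

Definition LHom (m n : nat) := {f : Z -> Z | cyc_map m n f}.

Lemma cyc_map_id (n : nat) : cyc_map n n (fun x => x).
Proof. repeat split; intros; lia. Qed.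

Definition Lnorm (p : nat) (g f : Z -> Z) : Z -> Z :=
  fun x => g (f x) - Z.of_nat (S p) * (g (f 0) / Z.of_nat (S p)).

Lemma cyc_map_comp (m n p : nat) (g f : Z -> Z) :
  cyc_map n p g -> cyc_map m n f -> cyc_map m p (Lnorm p g f).
Proof.
  intros [gm [gp g0]] [fm [fp f0]]. unfold Lnorm.
  assert (Hp : 0 < Z.of_nat (S p)) by lia.
  repeat split.
  - intros x y Hxy. specialize (gm _ _ (fm _ _ Hxy)). lia.
  - intros x. rewrite fp, gp. lia.
  - pose proof (Z.mod_pos_bound (g (f 0)) _ Hp).
    rewrite (Z.div_mod (g (f 0)) (Z.of_nat (S p))) at 1 by lia. lia.
  - pose proof (Z.mod_pos_bound (g (f 0)) _ Hp).
    rewrite (Z.div_mod (g (f 0)) (Z.of_nat (S p))) at 1 by lia. lia.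
Qed.

Definition Lambda : PreCat :=
  {| Obj := nat;
     Hom := LHom;
     idm := fun n => exist _ (fun x => x) (cyc_map_id n);
     comp := fun m n p g f =>
       exist _ (Lnorm p (proj1_sig g) (proj1_sig f))
             (cyc_map_comp (proj2_sig g) (proj2_sig f)) |}.

(* Cyclic injection: the induced map Z/(m+1) -> Z/(n+1) is injective. *)
Definition cyc_inj {m n : nat} (f : Hom Lambda m n) : Prop :=
  forall x y : Z, (Z.of_nat (S n) | proj1_sig f x - proj1_sig f y) ->
                  (Z.of_nat (S m) | x - y).

Lemma cyc_inj_id (n : nat) : cyc_inj (idm (p := Lambda) n).
Proof. intros x y H; exact H. Qed.

Lemma cyc_inj_comp (m n p : nat) (f : Hom Lambda m n) (g : Hom Lambda n p) :
  cyc_inj g -> cyc_inj f -> cyc_inj (comp g f).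
Proof.
  intros Hg Hf x y H. apply Hf, Hg. simpl in H. unfold Lnorm in H.
  replace (proj1_sig g (proj1_sig f x) - proj1_sig g (proj1_sig f y)) with
    (proj1_sig g (proj1_sig f x) - Z.of_nat (S p) * (proj1_sig g (proj1_sig f 0) / Z.of_nat (S p)) -
     (proj1_sig g (proj1_sig f y) - Z.of_nat (S p) * (proj1_sig g (proj1_sig f 0) / Z.of_nat (S p))))
    by ring.
  exact H.
Qed.

Definition LambdaInj : PreCat := @WideSub Lambda (@cyc_inj) cyc_inj_id cyc_inj_comp.
Close Scope Z_scope.

(* Main.v *)
Require Import Defs.
From Stdlib Require Import ZArith Lia List Classical ClassicalEpsilon ProofIrrelevance FunctionalExtensionality.
Open Scope Z_scope.

Lemma sig_eq {A : Type} {P : A -> Prop} (x y : {a : A | P a}) :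
  proj1_sig x = proj1_sig y -> x = y.
Proof. destruct x as [a pa], y as [b pb]; simpl; intros ->. f_equal. apply proof_irrelevance. Qed.

Lemma step_strict (g : Z -> Z) : (forall x, g x < g (x+1)) -> forall x y, x < y -> g x < g y.
Proof.
  intros H x y Hxy.
  replace y with (x + Z.of_nat (S (Z.to_nat (y - x - 1)))) by lia.
  remember (Z.to_nat (y - x - 1)) as k eqn:Hk; clear Hk.
  induction k as [|k IH].
  - specialize (H x). replace (x + Z.of_nat 1) with (x+1) by lia. exact H.
  - specialize (H (x + Z.of_nat (S k))).
    replace (x + Z.of_nat (S (S k))) with (x + Z.of_nat (S k) + 1) by lia. lia.
Qed.

Lemma step_mono (g : Z -> Z) : (forall x, g x <= g (x+1)) -> forall x y, x <= y -> g x <= g y.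
Proof.
  intros H x y Hxy.
  replace y with (x + Z.of_nat (Z.to_nat (y - x))) by lia.
  remember (Z.to_nat (y - x)) as k eqn:Hk; clear Hk.
  induction k as [|k IH].
  - replace (x + Z.of_nat 0) with x by lia. lia.
  - specialize (H (x + Z.of_nat k)).
    replace (x + Z.of_nat (S k)) with (x + Z.of_nat k + 1) by lia. lia.
Qed.

Lemma per_mult (g : Z -> Z) (P Q : Z) : (forall x, g (x + P) = g x + Q) ->
  forall q x, g (x + q * P) = g x + q * Q.
Proof.
  intros H.
  assert (Hn : forall n : nat, forall x, g (x + Z.of_nat n * P) = g x + Z.of_nat n * Q).
  { induction n as [|n IH]; intros x.
    - replace (x + Z.of_nat 0 * P) with x by lia. lia.
    - replace (x + Z.of_nat (S n) * P) with ((x + Z.of_nat n * P) + P) by lia.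
      rewrite H, IH. lia. }
  intros q x. destruct (Z_le_gt_dec 0 q) as [Hq|Hq].
  - replace q with (Z.of_nat (Z.to_nat q)) by lia. apply Hn.
  - specialize (Hn (Z.to_nat (-q)) (x + q * P)).
    replace (x + q * P + Z.of_nat (Z.to_nat (- q)) * P) with x in Hn by lia.
    replace (Z.of_nat (Z.to_nat (-q))) with (-q) in Hn by lia. lia.
Qed.

Lemma decomp (x : Z) (m : nat) : exists r q, 0 <= r <= Z.of_nat m /\ x = r + q * Z.of_nat (S m).
Proof.
  exists (x mod Z.of_nat (S m)), (x / Z.of_nat (S m)).
  pose proof (Z.mod_pos_bound x (Z.of_nat (S m)) ltac:(lia)).
  pose proof (Z.div_mod x (Z.of_nat (S m)) ltac:(lia)). split; lia.
Qed.

Lemma agree_periodic (m : nat) (Q : Z) (g1 g2 : Z -> Z) :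
  (forall x, g1 (x + Z.of_nat (S m)) = g1 x + Q) ->
  (forall x, g2 (x + Z.of_nat (S m)) = g2 x + Q) ->
  (forall r, 0 <= r <= Z.of_nat m -> g1 r = g2 r) -> forall x, g1 x = g2 x.
Proof.
  intros H1 H2 H x. destruct (decomp x m) as [r [q [Hr ->]]].
  rewrite (per_mult _ _ _ H1), (per_mult _ _ _ H2), H; auto.
Qed.

Lemma periodic_step (m : nat) (Q : Z) (g : Z -> Z) (R : Z -> Z -> Prop) :
  (forall a b c, R a b -> R (a + c) (b + c)) ->
  (forall x, g (x + Z.of_nat (S m)) = g x + Q) ->
  (forall r, 0 <= r <= Z.of_nat m -> R (g r) (g (r+1))) -> forall x, R (g x) (g (x+1)).
Proof.
  intros HR Hp H x. destruct (decomp x m) as [r [q [Hr ->]]].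
  rewrite (per_mult _ _ _ Hp).
  replace (r + q * Z.of_nat (S m) + 1) with ((r + 1) + q * Z.of_nat (S m)) by lia.
  rewrite (per_mult _ _ _ Hp). apply HR, H; auto.
Qed.

Lemma finite_inj {X Y : Type} (enc : X -> Y) (LY : list Y) :
  (forall x y, enc x = enc y -> x = y) -> (forall x, In (enc x) LY) ->
  exists L : list X, forall x, In x L.
Proof.
  intros Hinj Hin.
  assert (H: forall LY', exists L : list X, forall x, In (enc x) LY' -> In x L).
  { induction LY' as [|y LY' IH].
    - exists nil. intros x [].
    - destruct IH as [L HL]. destruct (classic (exists x, enc x = y)) as [[x0 Hx0]|Hno].
      + exists (x0 :: L). intros x [Hx|Hx]; [left; apply Hinj; congruence | right; auto].
      + exists L. intros x [Hx|Hx]; [exfalso; apply Hno; eauto | auto]. }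
  destruct (H LY) as [L HL]. exists L. auto.
Qed.

Fixpoint zlists (m : nat) (B : nat) : list (list Z) :=
  match m with
  | O => nil :: nil
  | S m' => flat_map (fun z => map (cons z) (zlists m' B)) (map Z.of_nat (seq 0 (S B)))
  end.

Lemma zlists_in (B : nat) (l : list Z) : (forall z, In z l -> 0 <= z <= Z.of_nat B) ->
  In l (zlists (length l) B).
Proof.
  induction l as [|a l IH]; intros H; cbn [length zlists].
  - left; reflexivity.
  - apply in_flat_map. exists a. split.
    + apply in_map_iff. exists (Z.to_nat a). split.
      * assert (0 <= a <= Z.of_nat B) by (apply H; simpl; auto). lia.
      * apply in_seq. assert (0 <= a <= Z.of_nat B) by (apply H; simpl; auto). lia.
    + apply in_map. apply IH. intros z Hz. apply H. simpl; auto.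
Qed.

Definition enc (m : nat) (f : Z -> Z) : list Z := map f (map Z.of_nat (seq 0 (S m))).

Lemma enc_len m f : length (enc m f) = S m.
Proof. unfold enc. rewrite !length_map, length_seq. reflexivity. Qed.

Lemma enc_bound m f (B : nat) : (forall r, 0 <= r <= Z.of_nat m -> 0 <= f r <= Z.of_nat B) ->
  forall z, In z (enc m f) -> 0 <= z <= Z.of_nat B.
Proof.
  intros H z Hz. unfold enc in Hz. rewrite map_map in Hz. apply in_map_iff in Hz.
  destruct Hz as [i [<- Hi]]. apply in_seq in Hi. apply H. lia.
Qed.

Lemma enc_in m f (B : nat) : (forall r, 0 <= r <= Z.of_nat m -> 0 <= f r <= Z.of_nat B) ->
  In (enc m f) (zlists (S m) B).
Proof. intros H. rewrite <- (enc_len m f). apply zlists_in. apply enc_bound; auto. Qed.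

Lemma map_eq_in {A B : Type} (f g : A -> B) (l : list A) : map f l = map g l -> forall x, In x l -> f x = g x.
Proof.
  induction l as [|a l IH]; simpl; intros H x Hx; [destruct Hx|].
  injection H as H1 H2. destruct Hx as [<-|Hx]; auto.
Qed.

Lemma enc_inj (m : nat) (Q : Z) (g1 g2 : Z -> Z) :
  (forall x, g1 (x + Z.of_nat (S m)) = g1 x + Q) ->
  (forall x, g2 (x + Z.of_nat (S m)) = g2 x + Q) ->
  enc m g1 = enc m g2 -> g1 = g2.
Proof.
  intros H1 H2 He. apply functional_extensionality. apply (agree_periodic m Q); auto.
  intros r Hr. apply (map_eq_in _ _ _ He). apply in_map_iff. exists (Z.to_nat r).
  split; [lia|]. apply in_seq. lia.
Qed.

Inductive lexZ : list Z -> list Z -> Prop :=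
| lex_hd a b l l' : a < b -> lexZ (a :: l) (b :: l')
| lex_tl a l l' : lexZ l l' -> lexZ (a :: l) (a :: l').

Lemma lexZ_irr l : ~ lexZ l l.
Proof. induction l as [|a l IH]; intros H; inversion H; subst; [lia | auto]. Qed.

Lemma lexZ_trans l1 l2 l3 : lexZ l1 l2 -> lexZ l2 l3 -> lexZ l1 l3.
Proof.
  intros H; revert l3; induction H as [a b l l' Hab | a l l' H IH]; intros l3 H3; inversion H3; subst.
  - apply lex_hd; lia.
  - apply lex_hd; lia.
  - apply lex_hd; lia.
  - apply lex_tl; auto.
Qed.

Lemma lexZ_total l l' : length l = length l' -> lexZ l l' \/ l = l' \/ lexZ l' l.
Proof.
  revert l'; induction l as [|a l IH]; intros [|b l'] Hl; simpl in Hl; try discriminate; auto.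
  destruct (Z.lt_total a b) as [H|[H|H]].
  - left; apply lex_hd; auto.
  - subst b. injection Hl as Hl. destruct (IH l' Hl) as [H|[H|H]].
    + left; apply lex_tl; auto.
    + subst; auto.
    + right; right; apply lex_tl; auto.
  - right; right; apply lex_hd; auto.
Qed.

Lemma lexZ_map (g : Z -> Z) : (forall x y, x < y -> g x < g y) ->
  forall l l', lexZ l l' -> lexZ (map g l) (map g l').
Proof. intros Hg l l' H; induction H; simpl; [apply lex_hd; auto | apply lex_tl; auto]. Qed.

Lemma wf_finite {X : Type} (R : X -> X -> Prop) (L : list X) :
  (forall x, In x L) -> (forall x, ~ R x x) -> (forall x y z, R x y -> R y z -> R x z) -> well_founded R.
Proof.
  intros HL Hirr Htr.
  assert (H : forall n (L' : list X), (length L' <= n)%nat -> forall x, (forall y, R y x -> In y L') -> Acc R x).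
  { induction n as [|n IH]; intros L' Hlen x Hx; constructor; intros y Hy.
    - destruct L'; [destruct (Hx y Hy) | simpl in Hlen; lia].
    - destruct (in_split _ _ (Hx y Hy)) as [l1 [l2 Heq]]. subst L'.
      apply (IH (l1 ++ l2)).
      + rewrite length_app in *; simpl in Hlen; lia.
      + intros z Hz. assert (Hzx : R z x) by eauto. specialize (Hx z Hzx).
        apply in_app_or in Hx. apply in_or_app. destruct Hx as [Hx|[Hx|Hx]]; auto.
        subst z. exfalso; exact (Hirr y Hz). }
  intros x. apply (H (length L) L (le_n _) x). intros y _; apply HL.
Qed.

Definition pOI (k n : nat) (j : Z -> Z) : Prop :=
  (forall x, j x < j (x+1)) /\ (forall x, j (x + Z.of_nat (S k)) = j x + Z.of_nat (S n)) /\ j 0 = 0.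

Lemma pOI_id k : pOI k k (fun x => x).
Proof. repeat split; intros; lia. Qed.

Lemma pOI_comp k n p (g f : Z -> Z) : pOI n p g -> pOI k n f -> pOI k p (fun x => g (f x)).
Proof.
  intros [g1 [g2 g3]] [f1 [f2 f3]]. repeat split.
  - intros x. apply (step_strict g g1). apply f1.
  - intros x. rewrite f2, g2. reflexivity.
  - rewrite f3; exact g3.
Qed.

Lemma pOI_range k n j : pOI k n j -> forall r, 0 <= r <= Z.of_nat k -> 0 <= j r <= Z.of_nat n.
Proof.
  intros [j1 [j2 j3]] r Hr.
  pose proof (step_strict j j1). specialize (j2 0).
  replace (0 + Z.of_nat (S k)) with (Z.of_nat k + 1) in j2 by lia.
  assert (j 0 <= j r) by (destruct (Z.eq_dec r 0); [subst; lia| apply Z.lt_le_incl; apply H; lia]).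
  assert (j r <= j (Z.of_nat k)) by (destruct (Z.eq_dec r (Z.of_nat k)); [subst; lia| apply Z.lt_le_incl; apply H; lia]).
  specialize (j1 (Z.of_nat k)). lia.
Qed.

Definition OIcat : PreCat :=
  {| Obj := nat;
     Hom := fun k n => {j : Z -> Z | pOI k n j};
     idm := fun k => exist _ (fun x => x) (pOI_id k);
     comp := fun a b c g f => exist _ (fun x => proj1_sig g (proj1_sig f x))
                                 (pOI_comp a b c _ _ (proj2_sig g) (proj2_sig f)) |}.

Lemma OIcat_cat : is_category OIcat.
Proof. repeat split; intros; apply sig_eq; reflexivity. Qed.

Lemma OI_G1 (c : Obj OIcat) : G1 c.
Proof.
  exists (fun c' (f f' : Hom OIcat c c') => lexZ (enc c (proj1_sig f)) (enc c (proj1_sig f'))).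
  split.
  - intros c'. split; [|split; [|split]].
    + intros x; apply lexZ_irr.
    + intros x y z; apply lexZ_trans.
    + intros x y. destruct (lexZ_total (enc c (proj1_sig x)) (enc c (proj1_sig y))) as [H|[H|H]];
        [rewrite !enc_len; reflexivity| auto | | auto].
      right; left. apply sig_eq. destruct x as [x Hx], y as [y Hy]. simpl in *.
      apply (enc_inj c (Z.of_nat (S c'))); auto; [apply Hx | apply Hy].
    + assert (Hfin : exists L : list (Hom OIcat c c'), forall x, In x L).
      { apply (finite_inj (fun j : Hom OIcat c c' => enc c (proj1_sig j)) (zlists (S c) c')).
        - intros [x Hx] [y Hy] H. apply sig_eq. simpl in *. apply (enc_inj c (Z.of_nat (S c'))); auto; [apply Hx | apply Hy].
        - intros [x Hx]. apply enc_in. apply pOI_range. exact Hx. }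
      destruct Hfin as [L HL]. apply (wf_finite _ L HL).
      * intros x; apply lexZ_irr.
      * intros x y z; apply lexZ_trans.
  - intros c' c'' g f f' H. simpl. unfold enc in *.
    rewrite <- (map_map (proj1_sig f) (proj1_sig g)), <- (map_map (proj1_sig f') (proj1_sig g)).
    apply lexZ_map; auto. apply (step_strict _ (proj1 (proj2_sig g))).
Qed.

Lemma nat_min (P : nat -> Prop) : (exists n, P n) -> exists n, P n /\ forall m, P m -> (n <= m)%nat.
Proof.
  intros [n Hn]. revert Hn. induction n as [n IH] using lt_wf_ind. intros Hn.
  destruct (classic (exists m, P m /\ (m < n)%nat)) as [[m [Hm Hlt]]|Hno].
  - exact (IH m Hlt Hm).
  - exists n. split; auto. intros m Hm. destruct (le_lt_dec n m); auto. exfalso; eauto.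
Qed.

Fixpoint iter_next (next : nat -> nat) (n : nat) : nat :=
  match n with O => next O | S n' => next (iter_next next n') end.

Lemma chain_le (g : nat -> nat) : (forall n, (g n <= g (S n))%nat) -> forall a b, (a <= b)%nat -> (g a <= g b)%nat.
Proof. intros H a b Hab; induction Hab; auto. specialize (H m); lia. Qed.

Lemma chain_lt (g : nat -> nat) : (forall n, (g n < g (S n))%nat) -> forall a b, (a < b)%nat -> (g a < g b)%nat.
Proof. intros H a b Hab; induction Hab; auto. specialize (H m); lia. Qed.

Lemma mono_sub (s : nat -> nat) : exists phi : nat -> nat,
  (forall n, phi n < phi (S n))%nat /\ (forall n, s (phi n) <= s (phi (S n)))%nat.
Proof.
  assert (Hnext : forall p, exists i, (p < i)%nat /\ forall i', (p < i')%nat -> (s i <= s i')%nat).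
  { intros p. destruct (nat_min (fun v => exists i, (p < i)%nat /\ s i = v)) as [v [[i [Hi Hv]] Hmin]].
    - exists (s (S p)), (S p). split; auto.
    - exists i. split; auto. intros i' Hi'. subst v. apply Hmin. eauto. }
  pose (next := fun p => proj1_sig (constructive_indefinite_description _ (Hnext p))).
  assert (Hn : forall p, (p < next p)%nat /\ forall i', (p < i')%nat -> (s (next p) <= s i')%nat).
  { intros p. exact (proj2_sig (constructive_indefinite_description _ (Hnext p))). }
  exists (iter_next next).
  assert (Hinc : forall n, (iter_next next n < iter_next next (S n))%nat).
  { intros n. simpl. apply Hn. }
  split; auto.
  intros n. destruct n as [|n].
  - simpl. apply (proj2 (Hn O)). specialize (Hinc O). simpl in Hinc. lia.
  - change (iter_next next (S n)) with (next (iter_next next n)).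
    apply (proj2 (Hn _)). pose proof (Hinc (S n)). pose proof (Hinc n). simpl in *. lia.
Qed.

Lemma dickson (m : nat) (s : nat -> nat -> nat) : exists phi : nat -> nat,
  (forall n, phi n < phi (S n))%nat /\ forall t, (t < m)%nat -> forall n, (s (phi n) t <= s (phi (S n)) t)%nat.
Proof.
  induction m as [|m IH].
  - exists (fun n => n). split; intros; lia.
  - destruct IH as [phi [Hphi Hs]].
    destruct (mono_sub (fun n => s (phi n) m)) as [psi [Hpsi Hs']].
    exists (fun n => phi (psi n)). split.
    + intros n. apply chain_lt; auto.
    + intros t Ht n. destruct (Nat.eq_dec t m) as [->|Hne].
      * apply Hs'.
      * apply (chain_le (fun k => s (phi k) t)); [intros; apply Hs; lia | specialize (Hpsi n); lia].
Qed.

Lemma ivt (g : Z -> Z) (r : Z) (N : nat) : forall a, g a <= r -> r < g (a + Z.of_nat N) ->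
  exists i, g i <= r < g (i+1).
Proof.
  induction N as [|N IH]; intros a H1 H2.
  - replace (a + Z.of_nat 0) with a in H2 by lia. lia.
  - destruct (Z_lt_le_dec r (g (a+1))) as [H|H].
    + exists a; lia.
    + apply (IH (a+1)); auto. replace (a + 1 + Z.of_nat N) with (a + Z.of_nat (S N)) by lia. auto.
Qed.

Lemma factor_OI (c n n' : nat) (j j' : Z -> Z) : pOI c n j -> pOI c n' j' ->
  (forall t, 0 <= t <= Z.of_nat c -> j (t+1) - j t <= j' (t+1) - j' t) ->
  exists h, pOI n n' h /\ forall x, h (j x) = j' x.
Proof.
  intros Hj Hj' Hd. pose proof Hj as [j1 [j2 j3]]. pose proof Hj' as [j1' [j2' j3']].
  assert (Hd' : forall x, j (x+1) - j x <= j' (x+1) - j' x).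
  { intros x. destruct (decomp x c) as [r [q [Hr ->]]].
    replace (r + q * Z.of_nat (S c) + 1) with ((r + 1) + q * Z.of_nat (S c)) by lia.
    rewrite !(per_mult _ _ _ j2), !(per_mult _ _ _ j2'). specialize (Hd r Hr). lia. }
  pose proof (step_strict j j1) as js.
  assert (Hex : forall y, exists i, j i <= y < j (i+1)).
  { intros y. destruct (decomp y n) as [r [q [Hr ->]]].
    destruct (ivt j r (S c) 0) as [i0 Hi0]; [lia| rewrite j2; lia|].
    exists (i0 + q * Z.of_nat (S c)).
    replace (i0 + q * Z.of_nat (S c) + 1) with ((i0 + 1) + q * Z.of_nat (S c)) by lia.
    rewrite !(per_mult _ _ _ j2). lia. }
  assert (Huniq : forall y i i', j i <= y < j (i+1) -> j i' <= y < j (i'+1) -> i = i').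
  { intros y i i' H1 H2. destruct (Z.lt_total i i') as [H|[H|H]]; auto.
    - assert (j (i+1) <= j i') by (destruct (Z.eq_dec (i+1) i'); [subst; lia| apply Z.lt_le_incl, js; lia]). lia.
    - assert (j (i'+1) <= j i) by (destruct (Z.eq_dec (i'+1) i); [subst; lia| apply Z.lt_le_incl, js; lia]). lia. }
  pose (I := fun y => proj1_sig (constructive_indefinite_description _ (Hex y))).
  assert (HI : forall y, j (I y) <= y < j (I y + 1)).
  { intros y. exact (proj2_sig (constructive_indefinite_description _ (Hex y))). }
  clearbody I.
  assert (Ij : forall x, I (j x) = x).
  { intros x. apply (Huniq (j x)); auto. specialize (j1 x). lia. }
  exists (fun y => j' (I y) + (y - j (I y))). split; [split; [|split]|].
  - intros y. destruct (Z_lt_le_dec (y+1) (j (I y + 1))) as [H|H].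
    + assert (I (y+1) = I y) as ->. { apply (Huniq (y+1)); auto. specialize (HI y); lia. }
      lia.
    + assert (E : y + 1 = j (I y + 1)) by (specialize (HI y); lia).
      cbv beta. rewrite E, Ij. specialize (Hd' (I y)). specialize (HI y). lia.
  - intros y. assert (I (y + Z.of_nat (S n)) = I y + Z.of_nat (S c)) as ->.
    { apply (Huniq (y + Z.of_nat (S n))); auto.
      replace (I y + Z.of_nat (S c) + 1) with ((I y + 1) + Z.of_nat (S c)) by lia.
      rewrite !j2. specialize (HI y). lia. }
    rewrite j2, j2'. lia.
  - assert (H0 : I 0 = 0) by (rewrite <- j3 at 1; apply Ij). cbv beta. rewrite H0, j3, j3'. lia.
  - intros x. rewrite Ij. lia.
Qed.

Lemma OI_G2 (c : Obj OIcat) : G2 c.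
Proof.
  intros s.
  pose (v := fun n t => Z.to_nat (proj1_sig (projT2 (s n)) (Z.of_nat t + 1) - proj1_sig (projT2 (s n)) (Z.of_nat t))).
  destruct (dickson (S c) v) as [phi [Hphi Hv]].
  exists (phi O), (phi 1%nat). split; [apply Hphi|].
  specialize (Hv) . unfold v in Hv.
  destruct (s (phi O)) as [n f] eqn:E1, (s (phi 1%nat)) as [n' f'] eqn:E2.
  unfold under_le. simpl.
  destruct (factor_OI c n n' (proj1_sig f) (proj1_sig f') (proj2_sig f) (proj2_sig f')) as [h [Hh Hhj]].
  - intros t Ht. specialize (Hv (Z.to_nat t) ltac:(lia) O). rewrite E1, E2 in Hv. simpl in Hv.
    replace (Z.of_nat (Z.to_nat t)) with t in Hv by lia.
    pose proof (proj1 (proj2_sig f) t). pose proof (proj1 (proj2_sig f') t). lia.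
  - exists (exist _ h Hh). apply sig_eq. simpl. apply functional_extensionality. intros x. symmetry. apply Hhj.
Qed.

Lemma OI_Groebner : Groebner OIcat.
Proof. intros c. split; [apply OI_G1 | apply OI_G2]. Qed.

Lemma build (D : nat) (B : Z -> Z) :
  (forall i, 0 <= i < Z.of_nat D -> B i <= B (i+1)) -> 0 <= B 0 ->
  forall d, (d <= D)%nat -> exists (k : nat) (J E : Z -> Z),
    (k <= S d)%nat /\ J 0 = 0 /\ (forall i, 0 <= i < Z.of_nat k -> J i < J (i+1)) /\
    J (Z.of_nat k) = B (Z.of_nat d) /\
    (forall i, 0 <= i < Z.of_nat d -> E i <= E (i+1)) /\
    (forall i, 0 <= i <= Z.of_nat d -> 0 <= E i <= Z.of_nat k) /\
    E (Z.of_nat d) = Z.of_nat k /\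
    (forall i, 0 <= i <= Z.of_nat d -> J (E i) = B i).
Proof.
  intros HB HB0. induction d as [|d IH]; intros Hd.
  - destruct (Z.eq_dec (B 0) 0) as [H0|H0].
    + exists O, (fun _ => 0), (fun _ => 0). simpl. repeat split; intros; try lia.
      assert (i = 0) as -> by lia. lia.
    + exists 1%nat, (fun i => if Z.eqb i 0 then 0 else B 0), (fun _ => 1). simpl.
      repeat split; intros; try lia.
      * assert (i = 0) as -> by lia. simpl. lia.
      * assert (i = 0) as -> by lia. reflexivity.
  - destruct (IH ltac:(lia)) as [k [J [E [Hk [J0 [Jinc [Jk [Einc [Ebd [Ed HJE]]]]]]]]]].
    assert (Hmon : B (Z.of_nat d) <= B (Z.of_nat (S d))).
    { replace (Z.of_nat (S d)) with (Z.of_nat d + 1) by lia. apply HB. lia. }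
    destruct (Z.eq_dec (B (Z.of_nat (S d))) (B (Z.of_nat d))) as [Heq|Hne].
    + exists k, J, (fun i => if Z.eqb i (Z.of_nat (S d)) then Z.of_nat k else E i).
      repeat split; intros.
      * lia.
      * exact J0.
      * apply Jinc; lia.
      * rewrite Jk; auto.
      * destruct (Z.eqb_spec i (Z.of_nat (S d))); destruct (Z.eqb_spec (i+1) (Z.of_nat (S d))); try lia.
        -- replace i with (Z.of_nat d) by lia. lia.
        -- apply Einc; lia.
      * destruct (Z.eqb_spec i (Z.of_nat (S d))); [lia| apply Ebd; lia].
      * destruct (Z.eqb_spec i (Z.of_nat (S d))); [lia| apply Ebd; lia].
      * rewrite Z.eqb_refl. reflexivity.
      * destruct (Z.eqb_spec i (Z.of_nat (S d))) as [->|Hi].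
        -- rewrite Jk; auto.
        -- apply HJE; lia.
    + exists (S k), (fun i => if Z.eqb i (Z.of_nat (S k)) then B (Z.of_nat (S d)) else J i),
        (fun i => if Z.eqb i (Z.of_nat (S d)) then Z.of_nat (S k) else E i).
      repeat split; intros.
      * lia.
      * simpl. destruct (Z.eqb_spec 0 (Z.of_nat (S k))); [lia| auto].
      * destruct (Z.eqb_spec i (Z.of_nat (S k))); destruct (Z.eqb_spec (i+1) (Z.of_nat (S k))); try lia.
        -- replace i with (Z.of_nat k) by lia. lia.
        -- apply Jinc; lia.
      * rewrite Z.eqb_refl. reflexivity.
      * destruct (Z.eqb_spec i (Z.of_nat (S d))); destruct (Z.eqb_spec (i+1) (Z.of_nat (S d))); try lia.
        -- replace i with (Z.of_nat d) by lia. lia.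
        -- apply Einc; lia.
      * destruct (Z.eqb_spec i (Z.of_nat (S d))); [lia| pose proof (Ebd i); lia].
      * destruct (Z.eqb_spec i (Z.of_nat (S d))); [lia| pose proof (Ebd i); lia].
      * rewrite Z.eqb_refl. reflexivity.
      * destruct (Z.eqb_spec i (Z.of_nat (S d))) as [->|Hi].
        -- rewrite Z.eqb_refl. reflexivity.
        -- assert (0 <= E i <= Z.of_nat k) by (apply Ebd; lia).
           destruct (Z.eqb_spec (E i) (Z.of_nat (S k))); [lia|]. apply HJE; lia.
Qed.

Definition ext (m : nat) (Q : Z) (G : Z -> Z) (x : Z) : Z :=
  G (x mod Z.of_nat (S m)) + (x / Z.of_nat (S m)) * Q.

Lemma ext_per m Q G : forall x, ext m Q G (x + Z.of_nat (S m)) = ext m Q G x + Q.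
Proof.
  intros x. unfold ext. replace (x + Z.of_nat (S m)) with (x + 1 * Z.of_nat (S m)) by lia.
  rewrite Z.mod_add, Z.div_add by lia. lia.
Qed.

Lemma ext_agree m Q G : forall r, 0 <= r <= Z.of_nat m -> ext m Q G r = G r.
Proof.
  intros r Hr. unfold ext. rewrite Z.mod_small, Z.div_small by lia. lia.
Qed.

Lemma core (d n : nat) (f : Z -> Z) : cyc_map d n f ->
  exists (k : nat) (j e : Z -> Z), (k <= S d)%nat /\ pOI k n j /\ cyc_map d k e /\ forall x, j (e x) = f x.
Proof.
  intros [fm [fp f0]].
  destruct (nat_min (fun p => Z.of_nat (S n) <= f (Z.of_nat p))) as [p [Hp Hpmin]].
  { exists (S d). rewrite <- (Z.add_0_l (Z.of_nat (S d))), fp. lia. }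
  assert (Hpd : (p <= S d)%nat). { apply Hpmin. rewrite <- (Z.add_0_l (Z.of_nat (S d))), fp. lia. }
  assert (Hp1 : (1 <= p)%nat). { destruct p; [simpl in Hp; lia| lia]. }
  assert (Hpm : f (Z.of_nat p - 1) <= Z.of_nat n).
  { destruct (Z_le_gt_dec (f (Z.of_nat p - 1)) (Z.of_nat n)) as [H|H]; auto.
    assert (Hc : (p <= p - 1)%nat). { apply Hpmin. replace (Z.of_nat (p - 1)) with (Z.of_nat p - 1) by lia. lia. }
    lia. }
  set (P := Z.of_nat p) in *.
  pose (B := fun i => f (i + P) - Z.of_nat (S n)).
  destruct (build d B) with (d := d) as [k [J [E [Hk [J0 [Jinc [Jk [Einc [Ebd [Ed HJE]]]]]]]]]].
  { intros i Hi. unfold B. replace (i + 1 + P) with ((i + P) + 1) by lia. specialize (fm (i+P) (i+P+1)). lia. }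
  { unfold B. simpl. lia. }
  { lia. }
  assert (HBd : B (Z.of_nat d) <= Z.of_nat n).
  { unfold B. replace (Z.of_nat d + P) with ((P - 1) + Z.of_nat (S d)) by lia. rewrite fp. lia. }
  pose (j := ext k (Z.of_nat (S n)) J).
  pose (e0 := ext d (Z.of_nat (S k)) E).
  assert (jper := ext_per k (Z.of_nat (S n)) J). fold j in jper.
  assert (e0per := ext_per d (Z.of_nat (S k)) E). fold e0 in e0per.
  assert (jag := ext_agree k (Z.of_nat (S n)) J). fold j in jag.
  assert (e0ag := ext_agree d (Z.of_nat (S k)) E). fold e0 in e0ag.
  clearbody j e0.
  assert (Hj : pOI k n j).
  { split; [|split]; auto.
    - apply (periodic_step k (Z.of_nat (S n)) j Z.lt); [intros; lia | auto |].
      intros r Hr. destruct (Z.eq_dec r (Z.of_nat k)) as [->|Hne].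
      + replace (Z.of_nat k + 1) with (0 + Z.of_nat (S k)) by lia. rewrite jper, !jag by lia. lia.
      + rewrite !jag by lia. apply Jinc; lia.
    - rewrite jag by lia. auto. }
  assert (e0step : forall x, e0 x <= e0 (x+1)).
  { apply (periodic_step d (Z.of_nat (S k)) e0 Z.le); [intros; lia | auto |].
    intros r Hr. destruct (Z.eq_dec r (Z.of_nat d)) as [->|Hne].
    + replace (Z.of_nat d + 1) with (0 + Z.of_nat (S d)) by lia. rewrite e0per, !e0ag by lia.
      pose proof (Ebd 0 ltac:(lia)). lia.
    + rewrite !e0ag by lia. apply Einc; lia. }
  assert (HjB : forall y, j (e0 y) = B y).
  { apply (agree_periodic d (Z.of_nat (S n))).
    - intros x. rewrite e0per. destruct Hj as [_ [Hj2 _]]. apply Hj2.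
    - intros x. unfold B. replace (x + Z.of_nat (S d) + P) with ((x + P) + Z.of_nat (S d)) by lia.
      rewrite fp. lia.
    - intros r Hr. rewrite e0ag by lia. rewrite jag by (apply Ebd; lia). apply HJE; lia. }
  exists k, j, (fun x => e0 (x - P) + Z.of_nat (S k)). split; [lia|]. split; [exact Hj|]. split; [split; [|split]|].
  - intros x y Hxy. pose proof (step_mono e0 e0step (x - P) (y - P) ltac:(lia)). lia.
  - intros x. replace (x + Z.of_nat (S d) - P) with ((x - P) + Z.of_nat (S d)) by lia. rewrite e0per. lia.
  - replace (0 - P) with ((Z.of_nat (S d) - P) - Z.of_nat (S d)) by lia.
    pose proof (e0per (Z.of_nat (S d) - P - Z.of_nat (S d))) as H.
    replace (Z.of_nat (S d) - P - Z.of_nat (S d) + Z.of_nat (S d)) with (Z.of_nat (S d) - P) in H by lia.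
    rewrite e0ag in H by lia. pose proof (Ebd (Z.of_nat (S d) - P) ltac:(lia)). lia.
  - intros x. destruct Hj as [_ [Hj2 _]]. rewrite Hj2, HjB. unfold B.
    replace (x - P + P) with x by lia. lia.
Qed.

Lemma pOI_cyc k n j : pOI k n j -> cyc_map k n j.
Proof.
  intros Hj. pose proof Hj as [j1 [j2 j3]]. split; [|split]; auto.
  - intros x y Hxy. destruct (Z.eq_dec x y) as [->|H]; [lia|]. apply Z.lt_le_incl, (step_strict j j1). lia.
  - lia.
Qed.

Lemma pOI_cinj k n j : pOI k n j -> forall x y, (Z.of_nat (S n) | j x - j y) -> (Z.of_nat (S k) | x - y).
Proof.
  intros Hj x y [c Hc]. pose proof Hj as [j1 [j2 j3]]. pose proof (step_strict j j1) as js.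
  destruct (decomp (x - y) k) as [r [q [Hr Hxy]]].
  assert (Hx : x = (y + r) + q * Z.of_nat (S k)) by lia.
  rewrite Hx, (per_mult _ _ _ j2) in Hc.
  assert (H1 : j y <= j (y + r)) by (destruct (Z.eq_dec r 0) as [->|]; [rewrite Z.add_0_r; lia | apply Z.lt_le_incl, js; lia]).
  assert (H2 : j (y + r) < j y + Z.of_nat (S n)).
  { rewrite <- j2. apply js. lia. }
  assert (c = q) by nia. subst c.
  assert (r = 0).
  { destruct (Z.eq_dec r 0); auto. assert (j y < j (y + r)) by (apply js; lia). lia. }
  exists q. lia.
Qed.

Definition F1mor (a b : nat) (j : Hom OIcat a b) : Hom Lambda a b :=
  exist _ (proj1_sig j) (pOI_cyc _ _ _ (proj2_sig j)).

Lemma F1_comp : forall a b c (f : Hom OIcat a b) (g : Hom OIcat b c),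
  F1mor a c (comp g f) = comp (F1mor b c g) (F1mor a b f).
Proof.
  intros a b c [f Hf] [g Hg]. apply sig_eq. simpl. apply functional_extensionality. intros x.
  unfold Lnorm. destruct Hf as [_ [_ f0]], Hg as [_ [_ g0]]. rewrite f0, g0, Z.div_0_l by lia. lia.
Qed.

Lemma F1_id : forall a : Obj OIcat, F1mor a a (idm a) = idm (p := Lambda) a.
Proof. intros a. apply sig_eq. reflexivity. Qed.

Definition F1 : Functor OIcat Lambda :=
  @Build_Functor OIcat Lambda (fun k => k) F1mor F1_comp F1_id.

Lemma F2_cinj a b (j : Hom OIcat a b) : cyc_inj (F1mor a b j).
Proof. intros x y H. exact (pOI_cinj a b _ (proj2_sig j) x y H). Qed.

Definition F2mor (a b : nat) (j : Hom OIcat a b) : Hom LambdaInj a b :=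
  exist _ (F1mor a b j) (F2_cinj a b j).

Lemma F2_comp : forall a b c (f : Hom OIcat a b) (g : Hom OIcat b c),
  F2mor a c (comp g f) = comp (F2mor b c g) (F2mor a b f).
Proof. intros. apply sig_eq. simpl. apply F1_comp. Qed.

Lemma F2_id : forall a : Obj OIcat, F2mor a a (idm a) = idm (p := LambdaInj) a.
Proof. intros a. apply sig_eq. apply sig_eq. reflexivity. Qed.

Definition F2 : Functor OIcat LambdaInj :=
  @Build_Functor OIcat LambdaInj (fun k => k) F2mor F2_comp F2_id.

Lemma cyc_bound d k f : cyc_map d k f -> forall r, 0 <= r <= Z.of_nat d -> 0 <= f r <= Z.of_nat (2 * k + 1).
Proof.
  intros [fm [fp f0]] r Hr. pose proof (fm 0 r ltac:(lia)). pose proof (fm r (0 + Z.of_nat (S d)) ltac:(lia)).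
  rewrite fp in H0. lia.
Qed.

Lemma homs_fin_L d k : exists L : list (Hom Lambda d k), forall x, In x L.
Proof.
  apply (finite_inj (fun f : Hom Lambda d k => enc d (proj1_sig f)) (zlists (S d) (2 * k + 1))).
  - intros [x Hx] [y Hy] H. apply sig_eq. simpl in *. apply (enc_inj d (Z.of_nat (S k))); auto; [apply Hx | apply Hy].
  - intros [x Hx]. apply enc_in. apply cyc_bound. exact Hx.
Qed.

Lemma homs_fin_I d k : exists L : list (Hom LambdaInj d k), forall x, In x L.
Proof.
  apply (finite_inj (fun f : Hom LambdaInj d k => enc d (proj1_sig (proj1_sig f))) (zlists (S d) (2 * k + 1))).
  - intros [[x Hx] Hx'] [[y Hy] Hy'] H. apply sig_eq. apply sig_eq. simpl in *.
    apply (enc_inj d (Z.of_nat (S k))); auto; [apply Hx | apply Hy].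
  - intros [[x Hx] Hx']. apply enc_in. apply cyc_bound. exact Hx.
Qed.

Lemma collect (H : nat -> Type) : (forall k, exists L : list (H k), forall x, In x L) ->
  forall N, exists L : list {k : nat & H k}, forall k, (k <= N)%nat -> forall x, In (existT _ k x) L.
Proof.
  intros Hf N. induction N as [|N IH].
  - destruct (Hf O) as [L HL]. exists (map (fun x => existT _ O x) L).
    intros k Hk x. assert (k = O) by lia. subst. apply in_map. auto.
  - destruct IH as [L1 HL1]. destruct (Hf (S N)) as [L HL].
    exists (map (fun x => existT _ (S N) x) L ++ L1).
    intros k Hk x. apply in_or_app. destruct (Nat.eq_dec k (S N)) as [->|Hne].
    + left. apply in_map. auto.
    + right. apply HL1. lia.
Qed.

Lemma Lnorm_fact d k n j e f : pOI k n j -> cyc_map d n f -> (forall x, j (e x) = f x) -> Lnorm n j e = f.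
Proof.
  intros Hj [_ [_ f0]] H. apply functional_extensionality. intros x. unfold Lnorm.
  rewrite !H. rewrite Z.div_small by lia. lia.
Qed.

Lemma e_cinj d k n (j e f : Z -> Z) : pOI k n j -> (forall x, j (e x) = f x) ->
  (forall x y, (Z.of_nat (S n) | f x - f y) -> (Z.of_nat (S d) | x - y)) ->
  (forall x y, (Z.of_nat (S k) | e x - e y) -> (Z.of_nat (S d) | x - y)).
Proof.
  intros [_ [j2 _]] Hje Hf x y [c Hc]. apply Hf. rewrite <- !Hje.
  replace (e x) with (e y + c * Z.of_nat (S k)) by lia. rewrite (per_mult _ _ _ j2).
  exists c. lia.
Qed.

Lemma iso_refl_L (d : Obj Lambda) : @isomorphic Lambda d d.
Proof.
  exists (idm d), (idm d). split; apply sig_eq; simpl; apply functional_extensionality; intros x;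
  unfold Lnorm; rewrite Z.div_0_l by lia; lia.
Qed.

Lemma iso_refl_I (d : Obj LambdaInj) : @isomorphic LambdaInj d d.
Proof.
  exists (idm d), (idm d). split; apply sig_eq; apply sig_eq; simpl; apply functional_extensionality; intros x;
  unfold Lnorm; rewrite Z.div_0_l by lia; lia.
Qed.

Theorem proposition5p9 : quasiGroebner Lambda /\ quasiGroebner LambdaInj.
Proof.
  split; exists OIcat; (split; [exact OIcat_cat| split; [exact OI_Groebner|]]).
  - exists F1. split.
    + intros d. exists d. apply iso_refl_L.
    + intros d. destruct (collect (fun k => Hom Lambda d k) (homs_fin_L d) (S d)) as [L HL].
      exists L. intros c f.
      destruct (core d c (proj1_sig f) (proj2_sig f)) as [k [j [e [Hk [Hj [He Hje]]]]]].
      exists (existT _ k (exist _ e He)). split; [apply HL; lia|].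
      exists (exist _ j Hj). apply sig_eq. simpl. symmetry. apply (Lnorm_fact d k); auto. apply (proj2_sig f).
  - exists F2. split.
    + intros d. exists d. apply iso_refl_I.
    + intros d. destruct (collect (fun k => Hom LambdaInj d k) (homs_fin_I d) (S d)) as [L HL].
      exists L. intros c f.
      destruct (core d c (proj1_sig (proj1_sig f)) (proj2_sig (proj1_sig f))) as [k [j [e [Hk [Hj [He Hje]]]]]].
      assert (Hei : cyc_inj (m := d) (n := k) (exist _ e He)).
      { intros x y. apply (e_cinj d k c j e (proj1_sig (proj1_sig f))); auto. exact (proj2_sig f). }
      exists (existT _ k (exist _ (exist _ e He) Hei)). split; [apply HL; lia|].
      exists (exist _ j Hj). apply sig_eq. apply sig_eq. simpl. symmetry.
      apply (Lnorm_fact d k); auto. apply (proj2_sig (proj1_sig f)).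
Qed.
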